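(* Let $P$ be a weak plane poset with underlying set $[n]$ such that the total order $\ll$ is the natural order of $[n]$. Then $$WLin(P)=\bigsqcup_{f\in Lin(P)}\{g\in PW(n)\mid g\prec f\},$$ and the union on the right-hand side is disjoint.
   Context: A packed word of length $n$ is a surjection $f:[n]\to[k]$ for some $k$, written $f(1)\cdots f(n)$; $PW(n)$ is the set of these. A weak plane poset is a finite set with two partial orders $\leq_1,\leq_2$ such that $x\leq_1 y$ and $x\leq_2 y$ imply $x=y$, and such that $x\preceq y\iff(x\leq_1 y$ or $x\leq_2 y)$ is a total quasi-order; $x\equiv y$ means $x\preceq y$ and $y\preceq x$; $x\ll y\iff(y\leq_1 x$ or $x\leq_2 y)$ is a total order. $Lin(P)$ is the set of surjections $f:[n]\to[k]$ such that $i\leq_1 j\Rightarrow f(i)\leq f(j)$ and $f(i)=f(j)\Rightarrow i\equiv j$ (linear extensions). $WLin(P)$ is the set of surjections $f:[n]\to[k]$ such that $i\leq_1 j\Rightarrow f(i)\leq f(j)$ and ($i\leq_1 j$ and $f(i)=f(j)$) $\Rightarrow i\equiv j$ (weak linear extensions). For $f,g\in PW(n)$, $g\prec f$ means: (1) for all $i,j$, $f(i)\leq f(j)\Rightarrow g(i)\leq g(j)$; (2) for all $i,j$, ($i<j$ and $f(i)>f(j)$) $\Rightarrow g(i)>g(j)$. (In particular $f\prec f$.) *)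

(* Defs.v *)
(* Elements of [n] = {1..n} are represented by 'I_n (i.e. 0..n-1,
   shift by one; order is preserved). Values of words are natural numbers in 1..k. *)
From mathcomp Require Import all_boot.
Set Implicit Arguments. Unset Strict Implicit. Unset Printing Implicit Defensive.

Definition word (n : nat) := {ffun 'I_n -> nat}.

Definition packed (n : nat) (f : word n) : Prop :=
  exists k : nat,
    (forall i, 1 <= f i <= k) /\ (forall v, 1 <= v <= k -> exists i, f i = v).

Definition is_partial_order (T : Type) (r : T -> T -> Prop) : Prop :=
  [/\ forall x, r x x,
      forall x y, r x y -> r y x -> x = y &
      forall x y z, r x y -> r y z -> r x z].

Definition is_total_quasi_order (T : Type) (r : T -> T -> Prop) : Prop :=
  [/\ forall x, r x x,
      forall x y z, r x y -> r y z -> r x z &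
      forall x y, r x y \/ r y x].

Definition is_total_order (T : Type) (r : T -> T -> Prop) : Prop :=
  is_partial_order r /\ forall x y, r x y \/ r y x.

Definition pqle (T : Type) (le1 le2 : T -> T -> Prop) (x y : T) : Prop :=
  le1 x y \/ le2 x y.
Definition pequiv (T : Type) (le1 le2 : T -> T -> Prop) (x y : T) : Prop :=
  pqle le1 le2 x y /\ pqle le1 le2 y x.
Definition pll (T : Type) (le1 le2 : T -> T -> Prop) (x y : T) : Prop :=
  le1 y x \/ le2 x y.

Definition weak_plane_poset (T : Type) (le1 le2 : T -> T -> Prop) : Prop :=
  [/\ is_partial_order le1, is_partial_order le2,
      (forall x y, le1 x y -> le2 x y -> x = y),
      is_total_quasi_order (pqle le1 le2) &
      is_total_order (pll le1 le2)].

Definition Lin (n : nat) (le1 le2 : 'I_n -> 'I_n -> Prop) (f : word n) : Prop :=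
  [/\ packed f,
      (forall i j, le1 i j -> f i <= f j) &
      (forall i j, f i = f j -> pequiv le1 le2 i j)].

Definition WLin (n : nat) (le1 le2 : 'I_n -> 'I_n -> Prop) (f : word n) : Prop :=
  [/\ packed f,
      (forall i j, le1 i j -> f i <= f j) &
      (forall i j, le1 i j -> f i = f j -> pequiv le1 le2 i j)].

Definition wprec (n : nat) (g f : word n) : Prop :=
  (forall i j, f i <= f j -> g i <= g j) /\
  (forall i j : 'I_n, i < j -> f i > f j -> g i > g j).

(* Main.v *)
Require Import Defs.
From mathcomp Require Import all_boot.
From mathcomp Require Import zify.
From Stdlib Require Import ClassicalEpsilon.
Set Implicit Arguments. Unset Strict Implicit. Unset Printing Implicit Defensive.
Lemma packed_iso_le n (f1 f2 : word n) :
  packed f1 -> packed f2 -> (forall i j, (f1 i <= f1 j) = (f2 i <= f2 j)) ->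
  forall i, f1 i <= f2 i.
Proof.
move=> [k1 [Hb1 Hs1]] [k2 [Hb2 Hs2]] Hiso.
suff H : forall m i, f1 i <= m -> f1 i <= f2 i by move=> i; exact: (H _ i (leqnn _)).
elim=> [|m IH] i Hi.
  by have := Hb1 i; lia.
have [Hle|Hgt] := leqP (f1 i) m; first exact: IH.
have Hfi : f1 i = m.+1 by lia.
case: m IH Hi Hgt Hfi => [|m] IH Hi Hgt Hfi.
  by have := Hb2 i; lia.
have [j Hj] : exists j, f1 j = m.+1 by apply: Hs1; have := Hb1 i; lia.
have := IH j; rewrite Hj => /(_ (leqnn _)) Hj2.
have : ~~ (f1 i <= f1 j) by rewrite Hj Hfi; lia.
rewrite Hiso; lia.
Qed.

Lemma packed_iso_eq n (f1 f2 : word n) :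
  packed f1 -> packed f2 -> (forall i j, (f1 i <= f1 j) = (f2 i <= f2 j)) -> f1 = f2.
Proof.
move=> P1 P2 Hiso; apply/ffunP=> i; apply/eqP; rewrite eqn_leq.
rewrite (packed_iso_le P1 P2 Hiso) (packed_iso_le P2 P1) //.
Qed.

Lemma pack_step n (h : word n) : (forall i, 1 <= h i) ->
  packed h \/ exists h' : word n, (forall i, 1 <= h' i) /\
     \sum_i h' i < \sum_i h i /\ (forall i j, (h' i <= h' j) = (h i <= h j)).
Proof.
move=> H1.
set K := \max_i h i.
case: (classic (forall v, 1 <= v <= K -> exists i, h i = v)) => [Hall|Hnot].
  left; exists K; split => // i; rewrite H1 /=; exact: leq_bigmax.
right.
have [v Hv] : exists v, ~ (1 <= v <= K -> exists i, h i = v).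
  by apply: not_all_ex_not.
have Hv1 : 1 <= v <= K by case: (boolP (1 <= v <= K)) => // Hb; exfalso; apply: Hv; rewrite (negbTE Hb).
have Hnv : forall i, h i <> v by move=> i Hi; apply: Hv => _; exists i.
have Hn : 0 < #|'I_n|.
  rewrite lt0n; apply/negP => /eqP/card0_eq H0.
  have : K = 0 by rewrite /K big1 // => i _; have := H0 i; rewrite inE.
  lia.
have [i0 Hi0] := eq_bigmax h Hn.
exists [ffun i => if v < h i then (h i).-1 else h i]; split; [|split].
- move=> i; rewrite ffunE; case: ifP => ?; have := H1 i; lia.
- have Hk : v < h i0 by have := Hnv i0; rewrite -Hi0 -/K; lia.
  rewrite [X in _ < X](bigD1 i0) //= (bigD1 i0) //= ffunE Hk.
  have : \sum_(i | i != i0) [ffun i => if v < h i then (h i).-1 else h i] i <=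
         \sum_(i | i != i0) h i.
    by apply: leq_sum => i _; rewrite ffunE; case: ifP => _; lia.
  move=> Hs; rewrite -addSn; apply: leq_add; [lia | exact: Hs].
- move=> i j; rewrite !ffunE; have := Hnv i; have := Hnv j; have := H1 i; have := H1 j.
  by case: ifP; case: ifP; lia.
Qed.

Lemma pack_exists n (h : word n) : (forall i, 1 <= h i) ->
  exists f : word n, packed f /\ forall i j, (f i <= f j) = (h i <= h j).
Proof.
move: {2}(\sum_i h i) (leqnn (\sum_i h i)) => s.
elim: s h => [|s IH] h Hs H1.
  case: (pack_step H1) => [P|[h' [_ [Hlt _]]]]; first by exists h.
  lia.
case: (pack_step H1) => [P|[h' [H1' [Hlt Hiso]]]]; first by exists h.
have [f [Pf Hf]] := IH h' ltac:(lia) H1'.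
by exists f; split => // i j; rewrite Hf Hiso.
Qed.
Definition pb (P : Prop) : bool := if excluded_middle_informative P then true else false.
Lemma pbP (P : Prop) : reflect P (pb P).
Proof. by rewrite /pb; case: excluded_middle_informative => H; constructor. Qed.

Definition hyps n (le1 le2 : 'I_n -> 'I_n -> Prop) :=
  weak_plane_poset le1 le2 /\ (forall x y : 'I_n, pll le1 le2 x y <-> (x <= y)%N).

Section S.
Context (n : nat) (le1 le2 : 'I_n -> 'I_n -> Prop).

Lemma le1_ge (H : hyps le1 le2) (x y : 'I_n) : le1 x y -> y <= x.
Proof. by case: H => _ HL Hxy; apply/HL; left. Qed.
Lemma le2_le (H : hyps le1 le2) (x y : 'I_n) : le2 x y -> x <= y.
Proof. by case: H => _ HL Hxy; apply/HL; right. Qed.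
Lemma pqle_back (H : hyps le1 le2) (x y : 'I_n) : y < x -> pqle le1 le2 x y -> le1 x y.
Proof. by move=> Hl [//|/(le2_le H)]; lia. Qed.
Lemma pqle_total (H : hyps le1 le2) (x y : 'I_n) : pqle le1 le2 x y \/ pqle le1 le2 y x.
Proof. by case: H => [[_ _ _ [_ _ T] _] _]. Qed.
Lemma pqle_trans (H : hyps le1 le2) (x y z : 'I_n) :
  pqle le1 le2 x y -> pqle le1 le2 y z -> pqle le1 le2 x z.
Proof. by case: H => [[_ _ _ [_ T _] _] _]; apply: T. Qed.
Lemma pequiv_refl (H : hyps le1 le2) (x : 'I_n) : pequiv le1 le2 x x.
Proof. by case: H => [[_ _ _ [R _ _] _] _]; split; apply: R. Qed.
Lemma pequiv_sym (x y : 'I_n) : pequiv le1 le2 x y -> pequiv le1 le2 y x.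
Proof. by case. Qed.
Lemma pequiv_trans (H : hyps le1 le2) (x y z : 'I_n) :
  pequiv le1 le2 x y -> pequiv le1 le2 y z -> pequiv le1 le2 x z.
Proof. by move=> [A B] [C D]; split; apply: pqle_trans H _ _ _ _ _; eassumption. Qed.

Lemma contig (H : hyps le1 le2) (g : word n) :
  (forall i j, le1 i j -> g i = g j -> pequiv le1 le2 i j) ->
  forall i k j : 'I_n, i < k -> k < j -> g i = g k -> g k = g j ->
  pequiv le1 le2 i j -> pequiv le1 le2 i k.
Proof.
move=> wl i k j Hik Hkj Gik Gkj [Pij Pji].
case: (pqle_total H k i) => [Pki|Pik].
  by apply: pequiv_sym; apply: wl => //; apply: pqle_back.
split => //.
case: (pqle_total H k j) => [Pkj|Pjk].
  exact: pqle_trans H _ _ _ Pkj Pji.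
have [Q _] : pequiv le1 le2 k j.
  by apply: pequiv_sym; apply: wl => //; apply: pqle_back.
exact: pqle_trans H _ _ _ Q Pji.
Qed.

Definition rset (g : word n) (i : 'I_n) : {set 'I_n} :=
  [set k : 'I_n | (k < i) && (g k == g i) && ~~ pb (pequiv le1 le2 k i)].

Lemma rset_eq (H : hyps le1 le2) (g : word n) :
  (forall i j, le1 i j -> g i = g j -> pequiv le1 le2 i j) ->
  forall i j : 'I_n, i < j -> g i = g j -> pequiv le1 le2 i j -> #|rset g i| = #|rset g j|.
Proof.
move=> wl i j Hij Gij Pij; apply: eq_card => k; rewrite !inE.
apply/idP/idP.
- move=> /andP[/andP[Hki /eqP Gki] /pbP Nki].
  apply/andP; split; first by apply/andP; split; [lia | apply/eqP; rewrite Gki].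
  by apply/pbP => Pkj; apply: Nki; exact: (pequiv_trans H Pkj (pequiv_sym Pij)).
- move=> /andP[/andP[Hkj /eqP Gkj] /pbP Nkj].
  have Hki : k < i.
    case: (ltngtP k i) => // Hc.
      exfalso; apply: Nkj; apply: (pequiv_trans H _ Pij).
      apply: pequiv_sym; apply: (contig H wl Hc Hkj _ _ Pij); congruence.
    by exfalso; apply: Nkj; have -> : k = i by apply: val_inj.
  apply/andP; split; first by apply/andP; split; [lia | apply/eqP; congruence].
  by apply/pbP => Pki; apply: Nkj; exact: (pequiv_trans H Pki Pij).
Qed.

Lemma rset_lt (H : hyps le1 le2) (g : word n) :
  (forall i j, le1 i j -> g i = g j -> pequiv le1 le2 i j) ->
  forall i j : 'I_n, i < j -> g i = g j -> ~ pequiv le1 le2 i j -> #|rset g i| < #|rset g j|.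
Proof.
move=> wl i j Hij Gij Nij; apply: proper_card; apply/properP; split.
  apply/subsetP => k; rewrite !inE => /andP[/andP[Hki /eqP Gki] /pbP Nki].
  apply/andP; split; first by apply/andP; split; [lia | apply/eqP; congruence].
  apply/pbP => Pkj; apply: Nki; apply: (contig H wl Hki Hij _ _ Pkj); congruence.
exists i; rewrite !inE; last by rewrite ltnn.
apply/andP; split; first by apply/andP; split; [lia | apply/eqP; congruence].
by apply/pbP.
Qed.

End S.

Lemma ord_cases n (i j : 'I_n) : i < j \/ j < i \/ i = j.
Proof.
case: (ltngtP i j) => H; [by left | by right; left | right; right; exact: val_inj].
Qed.

Theorem mainTheorem6 (n : nat) (le1 le2 : 'I_n -> 'I_n -> Prop) :
  weak_plane_poset le1 le2 ->
  (forall x y : 'I_n, pll le1 le2 x y <-> (x <= y)%N) ->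
  (forall g : word n,
      WLin le1 le2 g <-> (packed g /\ exists f : word n, Lin le1 le2 f /\ wprec g f)) /\
  (forall (g f1 f2 : word n),
      Lin le1 le2 f1 -> Lin le1 le2 f2 -> wprec g f1 -> wprec g f2 -> f1 = f2).
Proof.
move=> WP HL; have H : hyps le1 le2 by split.
split.
- move=> g; split.
  + case=> Pg mono wl; split => //.
    have Hr i : #|rset le1 le2 g i| < n.+1.
      by rewrite ltnS; apply: leq_trans (max_card _) _; rewrite card_ord.
    pose h : word n := [ffun i => g i * n.+1 + #|rset le1 le2 g i|].
    have H1 i j : g i < g j -> h i < h j.
      move=> Hg; rewrite !ffunE; have := Hr i; nia.
    have H2 i j : g i = g j -> (h i <= h j) = (#|rset le1 le2 g i| <= #|rset le1 le2 g j|).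
      by move=> Hg; rewrite !ffunE Hg leq_add2l.
    have Rle (i j : 'I_n) : i < j -> g i = g j -> #|rset le1 le2 g i| <= #|rset le1 le2 g j|.
      move=> Hij Gij; case: (classic (pequiv le1 le2 i j)) => Pij.
        by rewrite (rset_eq H wl Hij Gij Pij).
      exact: ltnW (rset_lt H wl Hij Gij Pij).
    have Hh1 i : 1 <= h i.
      rewrite ffunE; case: Pg => k [Hb _]; have := Hb i; nia.
    have [f [Pf Hf]] := pack_exists Hh1.
    exists f; split; [split|split].
    * exact: Pf.
    * move=> i j Hij; rewrite Hf; have Gle := mono i j Hij.
      case: (ltngtP (g i) (g j)) => Hg; first exact: ltnW (H1 _ _ Hg).
        lia.
      rewrite H2 //.
      case: (ord_cases i j) => [Hlt|[Hlt|->//]].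
        have := le1_ge H Hij; lia.
      rewrite (rset_eq H wl Hlt (esym Hg)) //.
      exact: pequiv_sym (wl _ _ Hij Hg).
    * move=> i j Fij.
      have Hij : h i = h j.
        by apply/eqP; rewrite eqn_leq -!Hf Fij leqnn.
      have Gij : g i = g j.
        case: (ltngtP (g i) (g j)) => // Hg.
          by have := H1 _ _ Hg; lia.
        by have := H1 _ _ Hg; lia.
      case: (ord_cases i j) => [Hlt|[Hlt|->]]; last exact: pequiv_refl.
        case: (classic (pequiv le1 le2 i j)) => // Pij.
        have := rset_lt H wl Hlt Gij Pij.
        have := H2 j i (esym Gij); rewrite Hij leqnn; lia.
      case: (classic (pequiv le1 le2 j i)) => Pij; first exact: pequiv_sym.
      have := rset_lt H wl Hlt (esym Gij) Pij.
      have := H2 i j Gij; rewrite Hij leqnn; lia.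
    * move=> i j; rewrite Hf => Hh; rewrite leqNgt; apply/negP => Hg.
      have := H1 _ _ Hg; lia.
    * move=> i j Hij; rewrite ltnNge Hf -ltnNge => Hh.
      case: (ltngtP (g i) (g j)) => // Hg.
        by have := H1 _ _ Hg; lia.
      have := Rle _ _ Hij Hg; rewrite -H2 //; lia.
  + case=> Pg [f [[Pf monof linf] [w1 w2]]]; split => //.
    * by move=> i j Hij; apply: w1; apply: monof.
    * move=> i j Hij Gij.
      case: (ord_cases i j) => [Hlt|[Hlt|->]]; last exact: pequiv_refl.
        by have := le1_ge H Hij; lia.
      have := monof _ _ Hij; rewrite leq_eqVlt => /orP[/eqP Fij|Fij].
        exact: linf.
      by have := w2 _ _ Hlt Fij; lia.
- move=> g f1 f2 L1 L2 W1 W2.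
  have K (f1' f2' : word n) : Lin le1 le2 f1' -> Lin le1 le2 f2' -> wprec g f1' -> wprec g f2' ->
      forall i j, f1' i <= f1' j -> f2' i <= f2' j.
    move=> [P1 m1 l1] [P2 m2 l2] [a1 b1] [a2 b2] i j H12.
    rewrite leqNgt; apply/negP => H21.
    have G1 := a1 _ _ H12; have G2 := a2 _ _ (ltnW H21).
    case: (ord_cases i j) => [Hlt|[Hlt|E]].
    + by have := b2 _ _ Hlt H21; lia.
    + move: H12; rewrite leq_eqVlt => /orP[/eqP Fij|Fij].
        have [Pij _] := l1 _ _ Fij.
        by have := m2 _ _ (pqle_back H Hlt Pij); lia.
      by have := b1 _ _ Hlt Fij; lia.
    + by move: H21; rewrite E ltnn.
  have P1 : packed f1 by case: L1.
  have P2 : packed f2 by case: L2.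
  apply: packed_iso_eq P1 P2 _ => i j; apply/idP/idP; [exact: K | exact: (K f2 f1)].
Qed.
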